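(* Let $G$ be a complete tiered graph on vertex set $[n]$. For each spanning tree $T$ of $G$ let $\mathrm{act}(T)$ be the set of externally active edges of $G$ with respect to $T$ (for the lexicographic order on edges) and let $T_{\mathrm{act}}$ be the edge set $E(T)\cup\mathrm{act}(T)$. Then the elements $$Z_{G\setminus T_{\mathrm{act}}}=\prod_{e\in E(G)\setminus T_{\mathrm{act}}} z_e,\qquad T\in ST(G),$$ span the space $\mathcal S_G$.
   Context: A complete tiered graph on $[n]$ with surjective tiering $\mathbf t:[n]\to[m]$ has edge set exactly $\{\{i,j\}: i<j,\ \mathbf t(i)<\mathbf t(j)\}$. An edge $e\notin T$ is externally active with respect to the spanning tree $T$ if it is the minimal edge (in the lexicographic order on edges, edges written as $(i,j)$ with $i<j$) of the unique cycle in $T\cup\{e\}$. A subset $H\subseteq E(G)$ is slim if the graph $(V(G),E(G)\setminus H)$ is connected. For an edge $e=\{i,j\}$ with $i<j$ set $z_e=z_i-z_j\in\mathbb K[z_1,\dots,z_n]$ ($\mathbb K$ a field of characteristic $0$), and for $H\subseteq E(G)$ set $Z_H=\prod_{e\in H}z_e$. $\mathcal S_G$ is the linear subspace of $\mathbb K[z_1,\dots,z_n]$ spanned by the $Z_H$ for all slim $H\subseteq E(G)$. *)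

(* Defs.v *)
From HB Require Import structures.
From mathcomp Require Import all_boot all_order all_algebra.
From mathcomp Require Import mpoly.
From Stdlib Require Import ClassicalEpsilon.
Set Implicit Arguments. Unset Strict Implicit. Unset Printing Implicit Defensive.
Import GRing.Theory.
Local Open Scope ring_scope.

(* Vertices of [n] are 'I_n (0-based); tiers [m] are 'I_m.
   An edge {i,j} with i<j is stored as the ordered pair (i,j). *)
Definition edge n := ('I_n * 'I_n)%type.

Definition tiered_edges n m (t : 'I_n -> 'I_m) : {set edge n} :=
  [set p : edge n | (p.1 < p.2)%N && (t p.1 < t p.2)%N].

Definition adj n (F : {set edge n}) : rel 'I_n :=
  fun u v => ((u, v) \in F) || ((v, u) \in F).

Definition connected_on n (F : {set edge n}) : Prop :=
  forall u v : 'I_n, connect (adj F) u v.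

Definition is_cycle n (F : {set edge n}) (c : seq 'I_n) : bool :=
  (3 <= size c)%N && ucycleb (adj F) c.

Definition acyclic n (F : {set edge n}) : Prop :=
  forall c : seq 'I_n, ~~ is_cycle F c.

Definition spanning_tree n (E T : {set edge n}) : Prop :=
  T \subset E /\ connected_on T /\ acyclic T.

Definition edge_of n (x y : 'I_n) : edge n :=
  if (x < y)%N then (x, y) else (y, x).

Definition lex_le n (e f : edge n) : bool :=
  (e.1 < f.1)%N || ((e.1 == f.1) && (e.2 <= f.2)%N).

(* e is externally active w.r.t. T: e is an edge of G not in T and it is
   the lex-minimal edge of the (unique) cycle of T ∪ {e}. *)
Definition ext_active n (E T : {set edge n}) (e : edge n) : Prop :=
  [/\ e \in E, e \notin T &
    exists c : seq 'I_n, is_cycle (e |: T) c /\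
      forall x, x \in c -> lex_le e (edge_of x (next c x))].

Definition asb (P : Prop) : bool :=
  if excluded_middle_informative P then true else false.

Definition act n (E T : {set edge n}) : {set edge n} :=
  [set e | asb (ext_active E T e) ].

Definition T_act n (E T : {set edge n}) : {set edge n} := T :|: act E T.

Definition slim n (E H : {set edge n}) : Prop :=
  H \subset E /\ connected_on (E :\: H).

Definition z_e (K : fieldType) n (e : edge n) : {mpoly K[n]} :=
  'X_e.1 - 'X_e.2.

Definition Z_ (K : fieldType) n (H : {set edge n}) : {mpoly K[n]} :=
  \prod_(e in H) z_e K e.

Definition in_span (K : fieldType) (V : lmodType K) (I : finType)
  (P : I -> Prop) (f : I -> V) (v : V) : Prop :=
  exists c : I -> K, (forall i, ~ P i -> c i = 0) /\ v = \sum_i c i *: f i.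

(* Main.v *)
Require Import Defs.
From HB Require Import structures.
From mathcomp Require Import all_boot all_order all_algebra.
From mathcomp Require Import mpoly.
From mathcomp Require Import zify.
From Stdlib Require Import ClassicalEpsilon.
Import GRing.Theory.
Local Open Scope ring_scope.
Set Implicit Arguments. Unset Strict Implicit. Unset Printing Implicit Defensive.

Definition strict n (F : {set edge n}) := forall p, p \in F -> (p.1 < p.2)%N.

Lemma adj_edge n (F : {set edge n}) u v : strict F -> adj F u v -> edge_of u v \in F.
Proof.
move=> sF; rewrite /adj /edge_of => /orP[]H; have := sF _ H => /= lt.
  by rewrite lt.
by rewrite ltnNge (ltnW lt) /=.
Qed.

Lemma edge_adj n (F : {set edge n}) u v : edge_of u v \in F -> adj F u v.
Proof. by rewrite /adj /edge_of; case: ifP => _ ->; rewrite ?orbT. Qed.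

Lemma edge_of_inj n (a b a' b' : 'I_n) : edge_of a b = edge_of a' b' ->
  (a = a' /\ b = b') \/ (a = b' /\ b = a').
Proof.
by rewrite /edge_of; case: ifP; case: ifP => _ _ [-> ->]; auto.
Qed.

Lemma nn_next (T : eqType) (c : seq T) x : uniq c -> (2 < size c)%N -> x \in c ->
  next c (next c x) != x.
Proof.
move=> Uc Sc xc; case: (rot_to xc) => i s Hr.
have Ur : uniq (x :: s) by rewrite -Hr rot_uniq.
have Sr : (2 < size (x :: s))%N by rewrite -Hr size_rot.
rewrite -!(next_rot i Uc) Hr.
case: s Hr Ur Sr => [|a [|b r]] //= Hr.
rewrite !inE !negb_or => /andP[/andP[xa /andP[xb _]] /andP[/andP[ab _] _]] _.
by rewrite eqxx /= (eq_sym a x) (negbTE xa) eqxx eq_sym.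
Qed.

Definition gc n (c : seq 'I_n) x := edge_of x (next c x).

Lemma gdist n (c : seq 'I_n) x y : uniq c -> (2 < size c)%N -> x \in c -> y \in c ->
  gc c x = gc c y -> x = y.
Proof.
move=> Uc Sc xc yc /edge_of_inj [[]//|[ex ey]].
by have := nn_next Uc Sc yc; rewrite -ex ey eqxx.
Qed.

Lemma path_src (T : eqType) (e e' : rel T) (P : pred T) a q : path e a q ->
  all P (belast a q) -> (forall y z, P y -> e y z -> e' y z) -> path e' a q.
Proof.
elim: q a => //= b q IH a /andP[eab pq] /andP[Pa Pq] H.
by rewrite (H _ _ Pa eab) /=; apply: IH.
Qed.

Lemma adj_sym n (F : {set edge n}) : ssrbool.symmetric (adj F).
Proof. by move=> u v; rewrite /adj orbC. Qed.

Lemma around n (F' : {set edge n}) c x : uniq c -> x \in c ->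
  (forall y, y \in c -> y != x -> adj F' y (next c y)) -> connect (adj F') (next c x) x.
Proof.
move=> Uc xc H; case: (rot_to xc) => i s Hr.
have Ur : uniq (x :: s) by rewrite -Hr rot_uniq.
have Hn : next c =1 next (x :: s) by move=> z; rewrite -Hr next_rot.
have Hm : forall z, (z \in x :: s) = (z \in c) by move=> z; rewrite -Hr mem_rot.
have cn := cycle_next Ur.
case: s Hr Ur Hn Hm cn => [|a s] Hr Ur Hn Hm cn.
  by rewrite Hn /= eqxx connect0.
rewrite Hn /= eqxx.
move: cn => /= /andP[_ pa].
apply/connectP; exists (rcons s x); last by rewrite last_rcons.
apply: (path_src (P := fun y => (y != x) && (y \in c))) pa _ _.
  rewrite belast_rcons; apply/allP => y ys; apply/andP; split.
    by apply: contraTneq ys => ->; move: Ur => /= /andP[].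
  by rewrite -Hm inE ys orbT.
move=> y z /andP[yx yc] /eqP <-; rewrite -Hn; exact: H.
Qed.

Lemma conn_sub n (F F' : {set edge n}) : connected_on F ->
  (forall u v, adj F u v -> connect (adj F') u v) -> connected_on F'.
Proof. by move=> cF H u v; apply: (connect_sub H (cF u v)). Qed.

Definition w n (e : edge n) : nat := (e.1 * n + e.2)%N.
Definition W n (F : {set edge n}) : nat := (\sum_(e in F) w e)%N.

Lemma w_fst n (e f : edge n) : (e.1 < f.1)%N -> (w e < w f)%N.
Proof.
rewrite /w => h; have := leq_mul h (leqnn n).
have := ltn_ord e.2; have := ltn_ord f.2; lia.
Qed.

Lemma w_inj n (e f : edge n) : w e = w f -> e = f.
Proof.
move=> h; case: (ltngtP e.1 f.1) => [l|l|l].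
- by have := w_fst l; rewrite h ltnn.
- by have := w_fst l; rewrite h ltnn.
have l2 : (e.2 : nat) = f.2 by move: h; rewrite /w l; lia.
case: e f l l2 {h} => [a b] [a' b'] /= l l2.
by congr pair; apply: val_inj.
Qed.

Lemma lex_w n (e f : edge n) : lex_le e f -> (w e <= w f)%N.
Proof.
rewrite /lex_le => /orP[l|/andP[/eqP l l2]]; first by apply: ltnW; apply: w_fst.
by rewrite /w l; lia.
Qed.

Lemma nlex_w n (e f : edge n) : ~~ lex_le e f -> (w f < w e)%N.
Proof.
rewrite /lex_le negb_or negb_and -leqNgt => /andP[l1 l2].
move: l1; rewrite leq_eqVlt => /orP[/eqP l|l]; last by apply: w_fst.
have l' : e.1 = f.1 by apply: val_inj.
move: l2; rewrite l' eqxx /= -ltnNge => l2.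
by rewrite /w -l; lia.
Qed.

Lemma lex_lt n (e f : edge n) : lex_le e f -> e != f -> (w e < w f)%N.
Proof.
move=> /lex_w; rewrite leq_eqVlt => /orP[/eqP/w_inj ->|//].
by rewrite eqxx.
Qed.

Section Span.
Lemma span0 (K : fieldType) (V : lmodType K) (I : finType) (P : I -> Prop) (f : I -> V) :
  in_span P f 0.
Proof. by exists (fun _ => 0); split=> // ; rewrite big1 // => i _; rewrite scale0r. Qed.

Lemma spanD (K : fieldType) (V : lmodType K) (I : finType) (P : I -> Prop) (f : I -> V) u v :
  in_span P f u -> in_span P f v -> in_span P f (u + v).
Proof.
move=> [a [Ha ->]] [b [Hb ->]]; exists (fun i => a i + b i); split.
  by move=> i Pi; rewrite Ha ?Hb ?addr0.
by rewrite -big_split /=; apply: eq_bigr => i _; rewrite scalerDl.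
Qed.

Lemma spanZ (K : fieldType) (V : lmodType K) (I : finType) (P : I -> Prop) (f : I -> V) k u :
  in_span P f u -> in_span P f (k *: u).
Proof.
move=> [a [Ha ->]]; exists (fun i => k * a i); split.
  by move=> i Pi; rewrite Ha ?mulr0.
by rewrite scaler_sumr; apply: eq_bigr => i _; rewrite scalerA.
Qed.

Lemma span_gen (K : fieldType) (V : lmodType K) (I : finType) (P : I -> Prop) (f : I -> V) i :
  P i -> in_span P f (f i).
Proof.
move=> Pi; exists (fun j => if j == i then 1 else 0); split.
  by move=> j Pj; case: eqP => // ji; case: Pj; rewrite ji.
rewrite (bigD1 i) //= eqxx scale1r big1 ?addr0 // => j /negbTE ->.
by rewrite scale0r.
Qed.

Lemma span_sum (K : fieldType) (V : lmodType K) (I : finType) (P : I -> Prop) (f : I -> V)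
  (X : eqType) (s : seq X) (Q : pred X) (F : X -> V) :
  (forall x, x \in s -> Q x -> in_span P f (F x)) ->
  in_span P f (\sum_(x <- s | Q x) F x).
Proof.
move=> H; rewrite big_seq_cond; apply: big_ind.
- exact: span0.
- exact: spanD.
by move=> x /andP[]; apply: H.
Qed.
End Span.

Lemma cyc_sum (K : fieldType) n (c : seq 'I_n) : uniq c ->
  \sum_(x <- c) ('X_x - 'X_(next c x) : {mpoly K[n]}) = 0.
Proof.
move=> Uc; rewrite sumrB -(big_map (next c) xpredT (fun y => 'X_y)).
have inj : injective (next c) by apply: (can_inj (prev_next Uc)).
have pe : perm_eq (map (next c) c) c.
  apply: uniq_perm; rewrite ?map_inj_uniq //.
  by move=> y; rewrite -{1}(next_prev Uc y) mem_map // mem_prev.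
by rewrite (perm_big _ pe) subrr.
Qed.

Definition sg (K : fieldType) n (c : seq 'I_n) (x : 'I_n) : K :=
  if (x < next c x)%N then 1 else -1.

Lemma sg_z (K : fieldType) n (c : seq 'I_n) x :
  ('X_x - 'X_(next c x) : {mpoly K[n]}) = sg K c x *: z_e K (gc c x).
Proof.
by rewrite /sg /gc /edge_of /z_e; case: ifP => _ /=; rewrite ?scale1r // scaleN1r opprB.
Qed.

Lemma sg2 (K : fieldType) n (c : seq 'I_n) x : sg K c x * sg K c x = 1.
Proof. by rewrite /sg; case: ifP; rewrite ?mulr1 ?mulrNN ?mulr1. Qed.

Lemma exch_alg (K : fieldType) n (c : seq 'I_n) x0 (H : {set edge n}) :
  uniq c -> x0 \in c -> gc c x0 \in H ->
  Z_ K H = \sum_(x <- c | x != x0)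
     (- (sg K c x0 * sg K c x)) *: (z_e K (gc c x) * Z_ K (H :\ gc c x0)).
Proof.
move=> Uc xc gH; rewrite /Z_ (big_setD1 _ gH) /=.
have e1 : z_e K (gc c x0) = sg K c x0 *: ('X_x0 - 'X_(next c x0)).
  by rewrite sg_z scalerA sg2 scale1r.
have e2 := cyc_sum K Uc; rewrite (bigD1_seq _ xc Uc) /= in e2.
have e3 : ('X_x0 - 'X_(next c x0) : {mpoly K[n]}) =
   - \sum_(x <- c | x != x0) ('X_x - 'X_(next c x)).
  by apply/eqP; rewrite -addr_eq0 e2.
rewrite e1 e3 scalerN scaler_sumr -sumrN mulr_suml.
apply: eq_bigr => x _; by rewrite sg_z scalerA scaleNr scalerAl mulNr.
Qed.

Lemma asbP (P : Prop) : asb P = true <-> P.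
Proof. by rewrite /asb; case: excluded_middle_informative. Qed.

Lemma in_act n (E T : {set edge n}) e : e \in act E T <-> ext_active E T e.
Proof. by rewrite inE; apply: asbP. Qed.

Lemma swap_conn n (F F' : {set edge n}) (c : seq 'I_n) x :
  strict F -> connected_on F -> uniq c -> (2 < size c)%N -> x \in c ->
  (forall y, y \in c -> y != x -> gc c y \in F') ->
  (forall e, e \in F -> e != gc c x -> e \in F') -> connected_on F'.
Proof.
move=> sF cF Uc Sc xc H1 H2; apply: (conn_sub cF) => u v /(adj_edge sF) uvF.
have csym := sym_connect_sym (adj_sym F').
have ar : connect (adj F') (next c x) x.
  by apply: around => // y yc yx; apply: edge_adj; apply: H1.
case: (eqVneq (edge_of u v) (gc c x)) => [|ne].
  by case/edge_of_inj => [[-> ->]|[-> ->]] //; rewrite csym.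
by apply: connect1; apply: edge_adj; apply: H2.
Qed.

Lemma W_le n (T : {set edge n}) : (W T <= W [set: edge n])%N.
Proof. by rewrite /W [X in (_ <= X)%N](big_setID T) /= setTI leq_addr. Qed.

Lemma W_D1 n (T : {set edge n}) g : g \in T -> W T = (w g + W (T :\ g))%N.
Proof. by move=> gT; rewrite /W (big_setD1 _ gT). Qed.

Lemma W_U1 n (T : {set edge n}) e : e \notin T -> W (e |: T) = (w e + W T)%N.
Proof. by move=> eT; rewrite /W (big_setU1 _ eT). Qed.

Lemma cyc_edge n (F : {set edge n}) c x : strict F -> cycle (adj F) c -> x \in c ->
  gc c x \in F.
Proof. by move=> sF cc xc; apply: adj_edge => //; apply: next_cycle cc xc. Qed.

Lemma lex_refl n (e : edge n) : lex_le e e.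
Proof. by rewrite /lex_le eqxx leqnn orbT. Qed.

Lemma arith1 (K1 B K2 K3 K4 : nat) : (K2 + K4 <= B)%N -> (K3 < K2)%N ->
  (K1 + (B - (K3 + K4)) <= K1 + (B - (K2 + K4)))%N -> False.
Proof. lia. Qed.

Lemma arith2 (K1 B W1 W2 : nat) : (W1 <= B)%N -> (W2 <= B)%N ->
  (B.+1 + (K1 + (B - W1)) <= K1 + (B - W2))%N -> False.
Proof. lia. Qed.

Lemma arith3 (a1 a2 a3 k : nat) : (a1 < a2)%N -> (a2 + a3 < k.+1)%N -> (a1 + a3 < k)%N.
Proof. lia. Qed.

Definition conb n (T : {set edge n}) := [forall u, [forall v, connect (adj T) u v]].
Lemma conbP n (T : {set edge n}) : reflect (connected_on T) (conb T).
Proof.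
apply: (iffP forallP) => [H u v|H u]; first by have /forallP := H u; apply.
by apply/forallP => v.
Qed.

Lemma tree_exists n (E F : {set edge n}) : strict E -> F \subset E -> connected_on F ->
  exists T : {set edge n}, [/\ T \subset F, spanning_tree E T & F \subset T_act E T].
Proof.
move=> sE FE cF.
have sF : strict F by move=> p /(subsetP FE)/sE.
pose B := W [set: edge n].
pose P := fun T : {set edge n} => (T \subset F) && conb T.
pose M := fun T : {set edge n} => (#|T| * B.+1 + (B - W T))%N.
have PF : P F by rewrite /P subxx; apply/conbP.
case: (arg_minnP M PF) => T /andP[TF /conbP cT] minT.
have sT : strict T by move=> p /(subsetP TF)/sF.
have acT : acyclic T.
  move=> c; apply/negP => /andP[Sc /andP[cyc Uc]].
  have [x xc] : exists x, x \in c.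
    by case: c Sc {cyc Uc} => // x c' _; exists x; exact: mem_head.
  have gT := cyc_edge sT cyc xc.
  have cT' : connected_on (T :\ gc c x).
    apply: (swap_conn (c:=c) (x:=x) sT cT Uc Sc xc).
    - move=> y yc yx; rewrite !inE (cyc_edge sT cyc yc) andbT.
      by apply: contra yx => /eqP/(gdist Uc Sc yc xc) ->.
    - by move=> e eT ne; rewrite !inE ne eT.
  have := minT (T :\ gc c x); rewrite /P.
  have -> : T :\ gc c x \subset F by apply: subset_trans TF; apply: subD1set.
  have -> : conb (T :\ gc c x) by apply/conbP.
  move=> /(_ isT); rewrite /M (cardsD1 (gc c x) T) gT.
  have := W_le (T :\ gc c x); have := W_le T; rewrite -/B.
  rewrite /= mulnDl mul1n -addnA; exact: arith2.
exists T; split => //; first by split => //; apply: subset_trans TF FE.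
apply/subsetP => e eF; rewrite /T_act inE; case eT: (e \in T) => //=.
apply/in_act; move: eF eT; case: e => a b eF eT.
have abE := subsetP FE _ eF.
have lt_e := sE _ abE; rewrite /= in lt_e.
split => //; first by rewrite eT.
have := cT a b => /connectP [p pp].
case: (shortenP pp) => p' pp' Up' _ lp.
pose c := a :: p'.
have ecT : strict ((a, b) |: T) by move=> q; rewrite !inE => /orP[/eqP ->|/sT].
have eeq : edge_of a b = (a, b) by rewrite /edge_of lt_e.
have cyc : cycle (adj ((a, b) |: T)) c.
  rewrite /c /= rcons_path -lp; apply/andP; split.
    by apply: sub_path pp' => u v; rewrite /adj !inE => /orP[]->; rewrite ?orbT.
  by rewrite /adj !inE eqxx orbT.
have Sc : (2 < size c)%N.
  rewrite /c /=; case: p' pp' Up' lp {cyc c} => [|v1 [|v2 q]] //=.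
  - by move=> _ _ ba; move: lt_e; rewrite ba ltnn.
  - move=> /andP[av _] _ ba; have := adj_edge sT av.
    by rewrite -ba eeq eT.
have Uc : uniq c by [].
exists c; split; first by rewrite /is_cycle Sc /ucycleb cyc Uc.
move=> x xc; rewrite -/(gc c x); apply/negPn/negP => nl.
have gin : gc c x \in (a, b) |: T by apply: cyc_edge ecT cyc xc.
have gne : gc c x != (a, b) by apply: contraNneq nl => ->; apply: lex_refl.
have gT : gc c x \in T by move: gin; rewrite !inE (negbTE gne).
pose T' := (a, b) |: (T :\ gc c x).
have cT' : connected_on T'.
  apply: (swap_conn (c:=c) (x:=x) sT cT Uc Sc xc).
  - move=> y yc yx; have := cyc_edge ecT cyc yc; rewrite !inE.
    case/orP => [->//|->]; rewrite andbT; apply/orP; right.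
    by apply: contra yx => /eqP/(gdist Uc Sc yc xc) ->.
  - by move=> e' e'T ne; rewrite !inE ne e'T orbT.
have := minT T'; rewrite /P.
have -> : T' \subset F.
  apply/subsetP => q; rewrite !inE => /orP[/eqP->//|/andP[_ /(subsetP TF)]] //.
have -> : conb T' by apply/conbP.
move=> /(_ isT).
have abT' : (a, b) \notin T :\ gc c x by rewrite !inE eT andbF.
rewrite /M /T' cardsU1 abT' (cardsD1 (gc c x) T) gT W_U1 //.
rewrite (W_D1 gT).
have := nlex_w nl; have := W_le T'; rewrite /T' W_U1 // -/B.
exact: arith1.
Qed.

Lemma adj_mono n (F F' : {set edge n}) u v : F \subset F' -> adj F u v -> adj F' u v.
Proof. by move=> /subsetP s; rewrite /adj => /orP[/s->|/s->]; rewrite ?orbT. Qed.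

Lemma main_span (K : fieldType) n (E : {set edge n}) : strict E -> forall F : {set edge n},
  F \subset E -> connected_on F ->
  in_span (spanning_tree E) (fun T => Z_ K (E :\: T_act E T)) (Z_ K (E :\: F)).
Proof.
move=> sE F0; have [k Hk] : exists k, (W F0 < k)%N by exists (W F0).+1.
elim: k F0 Hk => // k IH F Hk FE cF.
have sF : strict F by move=> p /(subsetP FE)/sE.
have [T [TF sT FT]] := tree_exists sE FE cF.
case: (eqVneq F (T_act E T)) => [->|ne]; first exact: span_gen sT.
have : ~~ (T_act E T \subset F) by apply: contra ne => sub; rewrite eqEsubset FT sub.
case/subsetPn => f fT fF.
have fnT : f \notin T by apply: contra fF; apply: (subsetP TF).
have fact : f \in act E T by move: fT; rewrite /T_act inE (negbTE fnT).
case/in_act: fact => fE _ [c [/andP[Sc /andP[cyc Uc]] lexc]].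
case: sT => [TE [cT acT]].
have sfT : strict (f |: T).
  by move=> q; rewrite !inE => /orP[/eqP ->|/(subsetP TE)]; apply: sE.
have [x0 x0c gx0] : exists2 x0, x0 \in c & gc c x0 = f.
  case: (boolP [exists x : 'I_n, (x \in c) && (gc c x == f)]) =>
     [/existsP[x /andP[xc /eqP gx]]|nex]; first by exists x.
  exfalso; have := acT c; rewrite /is_cycle Sc /ucycleb Uc andbT /=.
  move/negP; apply; apply: cycle_from_next => // x xc; apply: edge_adj.
  have := cyc_edge sfT cyc xc; rewrite !inE => /orP[/eqP gf|//].
  by move: nex; rewrite negb_exists => /forallP/(_ x); rewrite xc gf eqxx.
have fH : gc c x0 \in E :\: F by rewrite gx0 !inE fF fE.
rewrite (exch_alg K Uc x0c fH).
apply: span_sum => x xc xne; apply: spanZ.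
have gin : gc c x \in f |: T by apply: cyc_edge sfT cyc xc.
have gnf : gc c x != f.
  by apply: contra xne => /eqP; rewrite -gx0 => /(gdist Uc Sc xc x0c) ->.
have gT : gc c x \in T by move: gin; rewrite !inE (negbTE gnf).
have gF : gc c x \in F by apply: (subsetP TF).
have gE : gc c x \in E by apply: (subsetP FE).
pose F' := f |: (F :\ gc c x).
have eqZ : z_e K (gc c x) * Z_ K ((E :\: F) :\ gc c x0) = Z_ K (E :\: F').
  rewrite gx0 /Z_ -big_setU1 /=; last by rewrite !inE gF andbF.
  apply: eq_bigl => q; rewrite /F' !inE.
  have [->|qg] := eqVneq q (gc c x); first by rewrite (negbTE gnf) gE.
  have [->|qf] := eqVneq q f; by [].
rewrite eqZ; apply: IH.
- have lt : (w f < w (gc c x))%N.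
    by apply: (lex_lt (lexc x xc)); rewrite -/(gc c x) eq_sym.
  rewrite /F' W_U1; last by rewrite !inE (negbTE fF) andbF.
  move: Hk; rewrite (W_D1 gF); move: lt.
  move: (w f) (w (gc c x)) (W (F :\ gc c x)) => a1 a2 a3; exact: arith3.
- apply/subsetP => q; rewrite !inE => /orP[/eqP->//|/andP[_ /(subsetP FE)]] //.
apply: (swap_conn (c:=c) (x:=x) sF cF Uc Sc xc).
- move=> y yc yx; have := cyc_edge sfT cyc yc; rewrite /F' !inE.
  case/orP => [->//|yT]; apply/orP; right; rewrite (subsetP TF _ yT) andbT.
  by apply: contra yx => /eqP/(gdist Uc Sc yc xc) ->.
- by move=> e eF ne'; rewrite /F' !inE ne' eF orbT.
Qed.

Unset Implicit Arguments.
Set Strict Implicit.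

Theorem mainTheorem3 (K : fieldType) (K0 : [pchar K] =i pred0)
  (n m : nat) (t : 'I_n -> 'I_m) (t_surj : forall k : 'I_m, exists i, t i = k) :
  let E := tiered_edges t in
  (forall T : {set edge n}, spanning_tree E T ->
     in_span (slim E) (@Z_ K n) (Z_ K (E :\: T_act E T))) /\
  (forall H : {set edge n}, slim E H ->
     in_span (spanning_tree E) (fun T => Z_ K (E :\: T_act E T)) (Z_ K H)).
Proof.
move=> E.
have sE : strict E by move=> p; rewrite inE => /andP[].
split.
  move=> T [TE [cT acT]]; apply: span_gen; split; first exact: subsetDl.
  apply: (conn_sub cT) => u v uv; apply: connect1; apply: adj_mono uv.
  apply/subsetP => q qT; rewrite in_setD (subsetP TE _ qT) andbT in_setD (subsetP TE _ qT) andbT /T_act in_setU qT.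
  by [].
move=> H [HE cH].
have -> : H = E :\: (E :\: H).
  apply/setP => q; rewrite !in_setD; case qH: (q \in H) => /=.
    by rewrite (subsetP HE _ qH).
  by case: (q \in E).
by apply: main_span => //; apply: subsetDl.
Qed.
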